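(* Let $R$ be a commutative ring with $1\neq 0$, $S\subseteq R$ a multiplicatively closed subset, and $M$ an $S$-comultiplication $R$-module. If $N$ is an $S$-copure submodule of $M$, then $M/N$ is an $S$-comultiplication $R$-module.
   Context: All rings are commutative with $1\neq 0$ and all modules are unital. A multiplicatively closed subset (m.c.s.) $S$ of $R$ is a subset with $0\notin S$, $1\in S$, and $ss'\in S$ for all $s,s'\in S$. For an ideal $I$ and submodule $L$, $(L:_M I)=\{m\in M: Im\subseteq L\}$ and $(0:_M I)=\{m\in M: Im=0\}$. $M$ is an $S$-comultiplication module if for each submodule $N$ of $M$ there exist $s\in S$ and an ideal $I$ of $R$ with $s(0:_M I)\subseteq N\subseteq (0:_M I)$. A submodule $L$ of $M$ is $S$-copure if there exists $s\in S$ such that $s(L:_M I)\subseteq L+(0:_M I)$ for every ideal $I$ of $R$. *)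

(* Defs.v *)
From HB Require Import structures.
From mathcomp Require Import all_boot all_order all_algebra.
Set Implicit Arguments. Unset Strict Implicit. Unset Printing Implicit Defensive.
Import GRing.Theory.
Local Open Scope ring_scope.

Definition is_submodule (R : comNzRingType) (M : lmodType R) (N : M -> Prop) :=
  [/\ N 0, (forall x y, N x -> N y -> N (x + y)) & (forall (r : R) x, N x -> N (r *: x))].

Definition is_ideal (R : comNzRingType) (I : R -> Prop) :=
  [/\ I 0, (forall x y, I x -> I y -> I (x + y)) & (forall r x, I x -> I (r * x))].

Definition mcs (R : comNzRingType) (S : R -> Prop) :=
  [/\ ~ S 0, S 1 & (forall s t, S s -> S t -> S (s * t))].

Definition ann (R : comNzRingType) (M : lmodType R) (I : R -> Prop) : M -> Prop :=
  fun m => forall r, I r -> r *: m = 0.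

Definition colon (R : comNzRingType) (M : lmodType R) (L : M -> Prop) (I : R -> Prop)
  : M -> Prop := fun m => forall r, I r -> L (r *: m).

Definition subsum (R : comNzRingType) (M : lmodType R) (L K : M -> Prop) : M -> Prop :=
  fun m => exists a b, [/\ L a, K b & m = a + b].

Definition S_comultiplication (R : comNzRingType) (M : lmodType R) (S : R -> Prop) :=
  forall N : M -> Prop, is_submodule N ->
    exists s, S s /\ exists I : R -> Prop, [/\ is_ideal I,
      (forall m, ann I m -> N (s *: m)) & (forall m, N m -> ann I m)].

Definition S_copure (R : comNzRingType) (M : lmodType R) (S : R -> Prop) (L : M -> Prop) :=
  exists s, S s /\ forall I : R -> Prop, is_ideal I ->
    forall m, colon L I m -> subsum L (ann I) (s *: m).

(* Main.v *)
Require Import Defs.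
From HB Require Import structures.
From mathcomp Require Import all_boot all_order all_algebra.
Import GRing.Theory.
Local Open Scope ring_scope.

Theorem theorem3p4 (R : comNzRingType) (S : R -> Prop) (M : lmodType R)
  (N : M -> Prop) (Q : lmodType R) (f : {linear M -> Q}) :
  mcs S -> S_comultiplication M S -> is_submodule N -> S_copure S N ->
  (forall q : Q, exists m : M, f m = q) ->
  (forall m : M, f m = 0 <-> N m) ->
  S_comultiplication Q S.
Proof.
move=> [S0 S1 SM] Hco HN [t [St Ht]] Hsurj Hker K [K0 KD KZ].
have HK' : is_submodule (fun m => K (f m)).
  split; first by rewrite linear0.
  - by move=> x y Hx Hy; rewrite linearD; apply: KD.
  - by move=> r x Hx; rewrite linearZ; apply: KZ.
have [s [Ss [I [HI H1 H2]]]] := Hco _ HK'.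
exists (s * t); split; first exact: SM.
exists I; split => //.
- move=> q Hq.
  have [m Hm] := Hsurj q; subst q.
  have Hc : colon N I m.
    by move=> r Hr; apply/Hker; rewrite linearZ; apply: Hq.
  have [a [b [Na Bb Eab]]] := Ht I HI m Hc.
  rewrite -scalerA -(linearZZ f t m) Eab linearD.
  have -> : f a = 0 by apply/Hker.
  rewrite add0r -(linearZZ f s b).
  by apply: H1.
- move=> q Kq r Hr.
  have [m Hm] := Hsurj q; subst q.
  by rewrite -linearZ (H2 m Kq r Hr) linear0.
Qed.
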